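(* Let $\mathsf{A}\subset GL_2(\mathbb{R})$ with $\mathscr{R}(\mathsf{A})\neq\emptyset$ be such that $\mathcal{S}(\mathsf{A})$ is almost multiplicative. Let $X_u=\{A\mathbb{R}^2 : A\in\mathscr{R}(\mathsf{A})\}\subset\mathbb{RP}^1$ and $X_s=\{\ker A : A\in\mathscr{R}(\mathsf{A})\}\subset\mathbb{RP}^1$. Then $X_u$ and $X_s$ are nonempty, compact, and disjoint. Furthermore, for every nonzero $A\in\mathscr{S}(\mathsf{A})$ and every $V\in X_u$, $AV$ is a line and $AV\in X_u$.
   Context: $\|\cdot\|$ is the operator norm; $\mathbb{RP}^1$ is the real projective line (lines through the origin of $\mathbb{R}^2$). $\mathcal{S}(\mathsf{A})$ is the semigroup of finite products of elements of $\mathsf{A}$; $\mathscr{S}(\mathsf{A})=\overline{\mathbb{R}\mathcal{S}(\mathsf{A})}\subset M_2(\mathbb{R})$; $\mathscr{R}(\mathsf{A})=\{A\in\mathscr{S}(\mathsf{A}):\operatorname{rank}(A)=1\}$. A semigroup $\mathcal{S}$ is almost multiplicative if there is $\kappa>0$ with $\|AB\|\ge\kappa\|A\|\|B\|$ for all $A,B\in\mathcal{S}$. *)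

(* Defs.v *)
From HB Require Import structures.
From mathcomp Require Import all_boot all_order all_algebra.
From mathcomp Require Import all_classical all_reals all_analysis.
Set Implicit Arguments. Unset Strict Implicit. Unset Printing Implicit Defensive.
Import Order.TTheory GRing.Theory Num.Theory.
Import numFieldNormedType.Exports.
Local Open Scope classical_set_scope.
Local Open Scope ring_scope.

Section Defs.
Variable R : realType.

Definition eucl (x : 'cV[R]_2) : R := Num.sqrt (\sum_i (x i 0) ^+ 2).

Definition opnorm (A : 'M[R]_2) : R :=
  sup [set eucl (A *m x) | x in [set x : 'cV[R]_2 | eucl x = 1]].

Inductive semigroup_gen (A : set 'M[R]_2) : 'M[R]_2 -> Prop :=
| sg_base M : A M -> semigroup_gen A M
| sg_mul M N : semigroup_gen A M -> semigroup_gen A N -> semigroup_gen A (M *m N).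

Definition almost_multiplicative (S : set 'M[R]_2) : Prop :=
  exists2 kappa : R, 0 < kappa &
    forall M N, S M -> S N -> opnorm (M *m N) >= kappa * opnorm M * opnorm N.

Definition scrS (A : set 'M[R]_2) : set 'M[R]_2 :=
  closure [set c *: M | c in [set: R] & M in semigroup_gen A].

Definition scrR (A : set 'M[R]_2) : set 'M[R]_2 :=
  [set M | scrS A M /\ \rank M = 1%N].

(* points of RP^1 are lines through the origin, represented as subsets of R^2 *)
Definition span1 (v : 'cV[R]_2) : set 'cV[R]_2 := [set c *: v | c in [set: R]].
Definition is_line (L : set 'cV[R]_2) : Prop := exists2 v, v != 0 & L = span1 v.

Definition img (M : 'M[R]_2) : set 'cV[R]_2 := [set M *m x | x in [set: 'cV[R]_2]].
Definition kerm (M : 'M[R]_2) : set 'cV[R]_2 := [set x | M *m x = 0].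
Definition mapset (M : 'M[R]_2) (V : set 'cV[R]_2) : set 'cV[R]_2 := [set M *m x | x in V].

(* a set X of points of RP^1 is compact iff its preimage in the unit circle
   (under the quotient map S^1 -> RP^1, v |-> span v) is compact *)
Definition RP1_compact (X : set (set 'cV[R]_2)) : Prop :=
  compact [set v : 'cV[R]_2 | eucl v = 1 /\ X (span1 v)].

Definition Xu (A : set 'M[R]_2) : set (set 'cV[R]_2) := [set img M | M in scrR A].
Definition Xs (A : set 'M[R]_2) : set (set 'cV[R]_2) := [set kerm M | M in scrR A].
End Defs.

(* Main.v *)
Require Import Defs.
From HB Require Import structures.
From mathcomp Require Import all_boot all_order all_algebra.
From mathcomp Require Import all_classical all_reals all_analysis.
From mathcomp Require Import ring lra.
Set Implicit Arguments. Unset Strict Implicit. Unset Printing Implicit Defensive.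
Import Order.TTheory GRing.Theory Num.Theory.
Import numFieldNormedType.Exports.
Local Open Scope classical_set_scope.
Local Open Scope ring_scope.

Section Helpers.
Variable R : realType.

Lemma cont_sum (T : topologicalType) (I : finType) (F : I -> T -> R) :
  (forall i, continuous (F i)) -> continuous (fun t => \sum_i F i t).
Proof.
move=> HF; rewrite -fct_sumE.
elim/big_ind: _ => //.
- exact: cst_continuous.
- by move=> f g cf cg x; apply: continuousD; [exact: cf|exact: cg].
Qed.

Definition ec (T : topologicalType) m n (F : T -> 'M[R]_(m, n)) :=
  forall i j, continuous (fun t => F t i j).

Lemma entry_le_norm m n (M : 'M[R]_(m, n)) i j : `|M i j| <= `|M|.
Proof.
rewrite [leRHS]/Num.norm /= mx_normrE; apply/bigmax_geP; right => /=.
by exists (i, j).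
Qed.

Lemma norm_le_entries m n (M : 'M[R]_(m, n)) c :
  0 <= c -> (forall i j, `|M i j| <= c) -> `|M| <= c.
Proof.
move=> c0 H; rewrite [leLHS]/Num.norm /= mx_normrE.
by apply: bigmax_le => // ij _; apply: H.
Qed.

Lemma mx_cont (T : topologicalType) m n (F : T -> 'M[R]_(m, n)) :
  ec F -> continuous F.
Proof.
move=> HF t; apply/cvgrPdist_lt => e e0.
have : \forall s \near t, forall ij : 'I_m * 'I_n,
    `|F t ij.1 ij.2 - F s ij.1 ij.2| < e.
  apply: filter_forall => -[i j].
  exact: ((cvgrPdist_lt _ _).1 (HF i j t) e e0).
apply: filterS => s H.
rewrite [ltLHS]/Num.norm /= mx_normrE.
by apply: bigmax_lt => // ij _; rewrite !mxE; apply: H.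
Qed.

Lemma ec_mul (T : topologicalType) m n p (F : T -> 'M[R]_(m, n))
  (G : T -> 'M[R]_(n, p)) : ec F -> ec G -> ec (fun t => F t *m G t).
Proof.
move=> HF HG i j.
have -> : (fun t => (F t *m G t) i j) = (fun t => \sum_k F t i k * G t k j).
  by apply: funext => t; rewrite mxE.
apply: cont_sum => k x.
exact: (continuousM (HF i k x) (HG k j x)).
Qed.

Lemma ec_sub (T : topologicalType) m n (F G : T -> 'M[R]_(m, n)) :
  ec F -> ec G -> ec (fun t => F t - G t).
Proof.
move=> HF HG i j.
have -> : (fun t => (F t - G t) i j) = (fun t => F t i j - G t i j).
  by apply: funext => t; rewrite !mxE.
by move=> x; apply: continuousB; [exact: HF|exact: HG].
Qed.

Lemma ec_tr (T : topologicalType) m n (F : T -> 'M[R]_(m, n)) :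
  ec F -> ec (fun t => (F t)^T).
Proof.
move=> HF i j.
have -> : (fun t => (F t)^T i j) = (fun t => F t j i).
  by apply: funext => t; rewrite !mxE.
exact: HF.
Qed.

Lemma ec_cst (T : topologicalType) m n (M : 'M[R]_(m, n)) :
  ec (fun _ : T => M).
Proof. by move=> i j; exact: cst_continuous. Qed.

Lemma ec_id m n : ec (fun M : 'M[R]_(m, n) => M).
Proof. by move=> i j; exact: coord_continuous. Qed.

Lemma closed_sub_closure (T : topologicalType) (C S : set T) :
  closed S -> C `<=` S -> closure C `<=` S.
Proof.
move=> cS CS x /(closureS CS); by rewrite -(closure_id S).1.
Qed.

Lemma closure2 (T : topologicalType) (C : set T) (P : T -> T -> Prop) :
  (forall y, closed [set x | P x y]) -> (forall x, closed [set y | P x y]) ->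
  (forall x y, C x -> C y -> P x y) ->
  forall x y, closure C x -> closure C y -> P x y.
Proof.
move=> H1 H2 HC x y cx cy.
have Hx : forall y', C y' -> P x y'.
  move=> y' Cy'.
  have := closed_sub_closure (H1 y') (fun x' Cx' => HC x' y' Cx' Cy').
  by apply.
exact: (closed_sub_closure (H2 x) Hx).
Qed.


Lemma ord2P (i : 'I_2) : i = 0 \/ i = 1.
Proof. by case: i => [[|[|]]] // H; [left|right]; apply: val_inj. Qed.

Lemma sum2 (F : 'I_2 -> R) : \sum_i F i = F 0 + F 1.
Proof.
rewrite !big_ord_recl big_ord0 addr0; congr (_ + F _); exact: val_inj.
Qed.

Lemma mul2E (M : 'M[R]_2) (x : 'cV[R]_2) i :
  (M *m x) i 0 = M i 0 * x 0 0 + M i 1 * x 1 0.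
Proof. by rewrite mxE sum2. Qed.

Lemma eucl2 (x : 'cV[R]_2) : eucl x = Num.sqrt (x 0 0 ^+ 2 + x 1 0 ^+ 2).
Proof. by rewrite /eucl sum2. Qed.

Lemma sqrt_le (c s : R) : 0 <= c -> s <= c ^+ 2 -> Num.sqrt s <= c.
Proof.
move=> c0 sc; rewrite -(ger0_norm c0) -sqrtr_sqr ler_sqrt //.
exact: sqr_ge0.
Qed.

Lemma entry_le_eucl (x : 'cV[R]_2) i : `|x i 0| <= eucl x.
Proof.
rewrite eucl2 -sqrtr_sqr ler_sqrt; last by rewrite addr_ge0 // sqr_ge0.
by case: (ord2P i) => ->; [rewrite lerDl|rewrite lerDr]; rewrite sqr_ge0.
Qed.

Lemma eucl_le (x : 'cV[R]_2) : eucl x <= `|x 0 0| + `|x 1 0|.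
Proof.
rewrite eucl2; apply: sqrt_le; first by rewrite addr_ge0.
rewrite -[x 0 0 ^+ 2]real_normK ?num_real // -[x 1 0 ^+ 2]real_normK ?num_real //.
have h1 := normr_ge0 (x 0 0); have h2 := normr_ge0 (x 1 0).
nra.
Qed.

Lemma eucl_ge0 (x : 'cV[R]_2) : 0 <= eucl x.
Proof. exact: sqrtr_ge0. Qed.

Lemma op_ub (M : 'M[R]_2) (x : 'cV[R]_2) :
  eucl x = 1 -> eucl (M *m x) <= 4 * `|M|.
Proof.
move=> ex.
have hx i : `|x i 0| <= 1 by rewrite -ex entry_le_eucl.
have hM i j : `|M i j| <= `|M| by apply: entry_le_norm.
have hy i : `|(M *m x) i 0| <= 2 * `|M|.
  rewrite mul2E; apply: le_trans (ler_normD _ _) _; rewrite !normrM.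
  have a1 := hx 0; have a2 := hx 1; have b1 := hM i 0; have b2 := hM i 1.
  have c1 := normr_ge0 (M i 0); have c2 := normr_ge0 (M i 1).
  have d1 := normr_ge0 (x 0 0); have d2 := normr_ge0 (x 1 0).
  nra.
apply: le_trans (eucl_le _) _.
have := hy 0; have := hy 1; lra.
Qed.

Lemma op_set0 (M : 'M[R]_2) :
  [set eucl (M *m x) | x in [set x : 'cV[R]_2 | eucl x = 1]] !=set0.
Proof.
exists (eucl (M *m delta_mx 0 0)); exists (delta_mx 0 0) => //=.
rewrite eucl2 !mxE /= expr1n expr0n /= addr0; exact: sqrtr1.
Qed.

Lemma opnorm_le (M : 'M[R]_2) : opnorm M <= 4 * `|M|.
Proof.
apply: ge_sup; first exact: op_set0.
by move=> _ [x /= ex <-]; apply: op_ub.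
Qed.

Lemma opnorm_ge (M : 'M[R]_2) i j : `|M i j| <= opnorm M.
Proof.
apply: le_trans (@sup_upper_bound _ _ _ (eucl (M *m delta_mx j 0)) _).
- by rewrite -colE; apply: le_trans (entry_le_eucl _ i); rewrite mxE.
- split; first exact: op_set0.
  by exists (4 * `|M|) => _ [x /= ex <-]; apply: op_ub.
- exists (delta_mx j 0) => //=.
  rewrite eucl2 !mxE.
  by case: (ord2P j) => -> /=; rewrite ?expr1n ?expr0n /= ?addr0 ?add0r sqrtr1.
Qed.

Lemma norm_le_opnorm (M : 'M[R]_2) : `|M| <= opnorm M.
Proof.
apply: norm_le_entries; last by move=> i j; apply: opnorm_ge.
exact: le_trans (normr_ge0 _) (opnorm_ge M 0 0).
Qed.


Lemma ec_scale (T : topologicalType) m n (c : R) (F : T -> 'M[R]_(m, n)) :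
  ec F -> ec (fun t => c *: F t).
Proof.
move=> HF i j.
have -> : (fun t => (c *: F t) i j) = (fun t => c * F t i j).
  by apply: funext => t; rewrite !mxE.
move=> x; apply: continuousM; [exact: cst_continuous | exact: HF].
Qed.

Lemma closed_ineq (T : topologicalType) (f g : T -> R) :
  continuous f -> continuous g -> closed [set x | f x <= g x].
Proof.
move=> cf cg.
have -> : [set x | f x <= g x] = (fun x => g x - f x) @^-1` [set r | 0 <= r].
  by apply/seteqP; split => x /=; rewrite subr_ge0.
apply: preimage_closed; last exact: closed_ge.
by move=> x _; apply: continuousB; [exact: cg|exact: cf].
Qed.

Lemma cont_norm_comp (T : topologicalType) m n (F : T -> 'M[R]_(m, n)) :
  ec F -> continuous (fun t => `|F t|).
Proof.
move=> HF x.
exact (continuous_comp (mx_cont HF (x:=x)) (@norm_continuous _ 'M[R]_(m, n) (F x))).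
Qed.

Lemma cont_affl (T : topologicalType) (f : T -> R) (a b : R) :
  continuous f -> continuous (fun x => a * f x * b).
Proof.
move=> cf x.
apply: (@continuousM R T (fun x => a * f x) (fun _ => b) x); last exact: cst_continuous.
by apply: (@continuousM R T (fun _ => a) f x); [exact: cst_continuous|exact: cf].
Qed.

Section Semigroup.
Variable A : set 'M[R]_2.

Definition cone := [set c *: M | c in [set: R] & M in semigroup_gen A].

Lemma scrSE : scrS A = closure cone.
Proof. by []. Qed.

Lemma cone_mul x y : cone x -> cone y -> cone (x *m y).
Proof.
move=> [c _ [M hM <-]] [d _ [N hN <-]].
exists (c * d) => //; exists (M *m N); first exact: sg_mul.
by rewrite -scalemxAl -scalemxAr scalerA.
Qed.

Lemma cone_scale c x : cone x -> cone (c *: x).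
Proof.
move=> [d _ [M hM <-]]; exists (c * d) => //; exists M => //.
by rewrite scalerA.
Qed.

Lemma scrS_mul x y : scrS A x -> scrS A y -> scrS A (x *m y).
Proof.
rewrite scrSE; apply: (@closure2 _ cone (fun x y => closure cone (x *m y))).
- move=> y'; apply: (@preimage_closed _ _ (fun x : 'M[R]_2 => x *m y')); last exact: closed_closure.
  by move=> x' _; apply: mx_cont; apply: ec_mul; [exact: ec_id|exact: ec_cst].
- move=> x'; apply: (@preimage_closed _ _ (fun y : 'M[R]_2 => x' *m y)); last exact: closed_closure.
  by move=> y' _; apply: mx_cont; apply: ec_mul; [exact: ec_cst|exact: ec_id].
- by move=> x' y' cx cy; apply: subset_closure; apply: cone_mul.
Qed.

Lemma scrS_scale c x : scrS A x -> scrS A (c *: x).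
Proof.
rewrite scrSE => h.
apply: (@closed_sub_closure _ cone [set x | closure cone (c *: x)] _ _ _ h).
- apply: (@preimage_closed _ _ (fun x : 'M[R]_2 => c *: x)); last exact: closed_closure.
  by move=> x' _; apply: mx_cont; apply: ec_scale; exact: ec_id.
- by move=> x' cx; apply: subset_closure; apply: cone_scale.
Qed.

Lemma am_norm : almost_multiplicative (semigroup_gen A) ->
  exists2 k : R, 0 < k &
    forall M N, scrS A M -> scrS A N -> k * `|M| * `|N| <= `|M *m N|.
Proof.
move=> [kap kap0 Hk]; exists (kap / 4); first by rewrite divr_gt0.
have base M N : semigroup_gen A M -> semigroup_gen A N ->
    kap / 4 * `|M| * `|N| <= `|M *m N|.
  move=> hM hN.
  have h1 := Hk M N hM hN.
  have h2 := opnorm_le (M *m N).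
  have h3 := norm_le_opnorm M; have h4 := norm_le_opnorm N.
  have g1 := normr_ge0 M; have g2 := normr_ge0 N.
  have : kap * `|M| * `|N| <= kap * opnorm M * opnorm N.
    rewrite -!mulrA ler_pM2l //; apply: ler_pM => //.
  lra.
move=> M N; rewrite scrSE.
apply: (@closure2 _ cone (fun M N => kap / 4 * `|M| * `|N| <= `|M *m N|)).
- move=> y; apply: closed_ineq.
  + by apply: cont_affl; apply: cont_norm_comp; exact: ec_id.
  + by apply: cont_norm_comp; apply: ec_mul; [exact: ec_id|exact: ec_cst].
- move=> x; apply: closed_ineq.
  + have -> : (fun y : 'M[R]_2 => kap / 4 * `|x| * `|y|) =
              (fun y : 'M[R]_2 => kap / 4 * `|x| * `|y| * 1).
      by apply: funext => y; rewrite mulr1.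
    by apply: cont_affl; apply: cont_norm_comp; exact: ec_id.
  + by apply: cont_norm_comp; apply: ec_mul; [exact: ec_cst|exact: ec_id].
- move=> x y [c _ [M' hM <-]] [d _ [N' hN <-]].
  rewrite -scalemxAl -scalemxAr scalerA !normrZ.
  have := base _ _ hM hN.
  have g1 := normr_ge0 c; have g2 := normr_ge0 d.
  have g3 := normr_ge0 M'; have g4 := normr_ge0 N'.
  move=> hb.
  have : `|c| * `|d| * (kap / 4 * `|M'| * `|N'|) <= `|c| * `|d| * `|M' *m N'|.
    by apply: ler_wpM2l => //; apply: mulr_ge0.
  suff -> : kap / 4 * (`|c| * `|M'|) * (`|d| * `|N'|) =
            `|c| * `|d| * (kap / 4 * `|M'| * `|N'|) by [].
  ring.
Qed.

End Semigroup.

Lemma det2 (M : 'M[R]_2) : \det M = M 0 0 * M 1 1 - M 0 1 * M 1 0.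
Proof.
rewrite (expand_det_row _ 0) sum2 /cofactor !det_mx11 !mxE /=.
have l0 : lift 0 (0 : 'I_1) = 1 :> 'I_2 by apply: val_inj.
have l1 : lift 1 (0 : 'I_1) = 0 :> 'I_2 by apply: val_inj.
rewrite l0 l1 expr0 expr1; ring.
Qed.

Lemma rank1_neq0 m n (M : 'M[R]_(m, n)) : \rank M = 1%N -> M != 0.
Proof. by move=> r1; apply/negP => /eqP M0; move: r1; rewrite M0 mxrank0. Qed.

Lemma rank1_det (M : 'M[R]_2) : \rank M = 1%N -> M 0 0 * M 1 1 - M 0 1 * M 1 0 = 0.
Proof.
move=> r1; rewrite -det2; apply/eqP; apply/negPn/negP => d0.
have : M \in unitmx by rewrite unitmxE unitfE.
by move/mxrank_unit; rewrite r1.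
Qed.

Lemma cross2 (Q : 'M[R]_2) (a b : 'cV[R]_2) :
  (Q *m a) 0 0 * (Q *m b) 1 0 - (Q *m a) 1 0 * (Q *m b) 0 0 =
  (Q 0 0 * Q 1 1 - Q 0 1 * Q 1 0) * (a 0 0 * b 1 0 - a 1 0 * b 0 0).
Proof. rewrite !mul2E; ring. Qed.

Lemma cV2_eq (x y : 'cV[R]_2) : x 0 0 = y 0 0 -> x 1 0 = y 1 0 -> x = y.
Proof.
move=> h0 h1; apply/matrixP => i j; rewrite (ord1 j).
by case: (ord2P i) => ->.
Qed.

Lemma cV2_neq0 (u : 'cV[R]_2) : u != 0 -> u 0 0 ^+ 2 + u 1 0 ^+ 2 != 0.
Proof.
move=> u0; apply/negP => /eqP s0; move/negP: u0; apply; apply/eqP.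
have h0 := sqr_ge0 (u 0 0); have h1 := sqr_ge0 (u 1 0).
have e0 : u 0 0 ^+ 2 = 0 by lra.
have e1 : u 1 0 ^+ 2 = 0 by lra.
by apply: (@cV2_eq u 0); rewrite mxE; apply/eqP; rewrite -sqrf_eq0 ?e0 ?e1.
Qed.

Lemma par2 (u y : 'cV[R]_2) : u != 0 ->
  u 0 0 * y 1 0 - u 1 0 * y 0 0 = 0 -> exists c, y = c *: u.
Proof.
move=> u0 cr; have s0 := cV2_neq0 u0.
set s := u 0 0 ^+ 2 + u 1 0 ^+ 2 in s0.
exists ((u 0 0 * y 0 0 + u 1 0 * y 1 0) / s).
apply: cV2_eq; rewrite mxE; apply/eqP; rewrite -subr_eq0; apply/eqP.
- have -> : y 0 0 - (u 0 0 * y 0 0 + u 1 0 * y 1 0) / s * u 0 0 =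
     - u 1 0 * (u 0 0 * y 1 0 - u 1 0 * y 0 0) / s by rewrite /s; field.
  by rewrite cr mulr0 mul0r.
- have -> : y 1 0 - (u 0 0 * y 0 0 + u 1 0 * y 1 0) / s * u 1 0 =
     u 0 0 * (u 0 0 * y 1 0 - u 1 0 * y 0 0) / s by rewrite /s; field.
  by rewrite cr mulr0 mul0r.
Qed.

Lemma is_line_img (Q : 'M[R]_2) : \rank Q = 1%N -> is_line (img Q).
Proof.
move=> r1; have d0 := rank1_det r1; have Q0 := rank1_neq0 r1.
have [j uj] : exists j : 'I_2, Q *m (delta_mx j 0 : 'cV[R]_2) != 0.
  apply/not_existsP => H; move/negP: Q0; apply; apply/eqP.
  apply/matrixP => i j; have /negP/negPn/eqP := H j.
  move/(congr1 (fun v : 'cV[R]_2 => v i 0)); rewrite -colE !mxE => ->.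
  by [].
exists (Q *m delta_mx j 0) => //.
apply/seteqP; split.
- move=> _ [x _ <-].
  have [c ->] : exists c, Q *m x = c *: (Q *m delta_mx j 0).
    by apply: par2 => //; rewrite cross2 d0 mul0r.
  by exists c.
- move=> _ [c _ <-]; exists (c *: delta_mx j 0) => //.
  by rewrite -scalemxAr.
Qed.

Lemma img_rank1 (u : 'cV[R]_2) (w : 'rV[R]_2) : w != 0 -> img (u *m w) = span1 u.
Proof.
move=> w0.
have key (x : 'cV[R]_2) : (u *m w) *m x = (w *m x) 0 0 *: u.
  by rewrite -mulmxA {1}[w *m x]mx11_scalar mul_mx_scalar.
apply/seteqP; split.
- by move=> _ [x _ <-]; rewrite key; exists ((w *m x) 0 0).
- have [j wj] : exists j : 'I_2, w 0 j != 0.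
    apply/not_existsP => H; move/negP: w0; apply; apply/eqP.
    apply/matrixP => i j; rewrite (ord1 i) mxE.
    by have /negP/negPn/eqP := H j.
  move=> _ [c _ <-]; exists ((c / w 0 j) *: delta_mx j 0) => //.
  rewrite key -scalemxAr -colE !mxE; congr (_ *: _).
  by rewrite divfK.
Qed.

Lemma eucl1 (v : 'cV[R]_2) : eucl v = 1 <-> \sum_i v i 0 ^+ 2 = 1.
Proof.
rewrite /eucl; split => [h|->]; last exact: sqrtr1.
have g : 0 <= \sum_i v i 0 ^+ 2 by apply: sumr_ge0 => i _; apply: sqr_ge0.
by rewrite -(sqr_sqrtr g) h expr1n.
Qed.

Lemma vTv (v : 'cV[R]_2) : \sum_i v i 0 ^+ 2 = 1 -> v^T *m v = 1.
Proof.
move=> h; apply/matrixP => i j; rewrite (ord1 i) (ord1 j) !mxE -h /=.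
by apply: eq_bigr => k _; rewrite mxE expr2.
Qed.

Lemma mx_eq0_ext m n (P : 'M[R]_(m, n)) : (forall x : 'cV[R]_n, P *m x = 0) -> P = 0.
Proof.
move=> H; apply/matrixP => i j.
by have := congr1 (fun v : 'cV[R]_m => v i 0) (H (delta_mx j 0)); rewrite -colE !mxE.
Qed.


Lemma row_fact (a b v0 v1 x0 x1 : R) : v0 ^+ 2 + v1 ^+ 2 = 1 ->
  a * v0 + b * v1 = 0 -> a * x0 + b * x1 = 0 ->
  [/\ (a * v1 - b * v0) * (x0 * v1 - x1 * v0) = 0,
      a = (a * v1 - b * v0) * v1 & b = - (a * v1 - b * v0) * v0].
Proof.
move=> u h1 h2.
have e1 : a - (a * v1 - b * v0) * v1 = v0 * (a * v0 + b * v1) + a * (1 - (v0 ^+ 2 + v1 ^+ 2)) by ring.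
have e2 : b - (- (a * v1 - b * v0) * v0) = v1 * (a * v0 + b * v1) + b * (1 - (v0 ^+ 2 + v1 ^+ 2)) by ring.
rewrite h1 u subrr !mulr0 addr0 in e1 e2.
move/eqP: e1; rewrite subr_eq0 => /eqP e1.
move/eqP: e2; rewrite subr_eq0 => /eqP e2.
split => //.
have e3 : a * x0 + b * x1 = (a * v1 - b * v0) * (x0 * v1 - x1 * v0) +
   x0 * (a - (a * v1 - b * v0) * v1) + x1 * (b - (- (a * v1 - b * v0) * v0)) by ring.
by rewrite -e1 -e2 !subrr !mulr0 !addr0 h2 in e3.
Qed.

Lemma ker2 (P : 'M[R]_2) (v x : 'cV[R]_2) : P != 0 ->
  v 0 0 ^+ 2 + v 1 0 ^+ 2 = 1 -> P *m v = 0 -> P *m x = 0 ->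
  x = (v 0 0 * x 0 0 + v 1 0 * x 1 0) *: v.
Proof.
move=> P0 u hv hx.
have hvi i : P i 0 * v 0 0 + P i 1 * v 1 0 = 0.
  by have := congr1 (fun y : 'cV[R]_2 => y i 0) hv; rewrite mul2E mxE.
have hxi i : P i 0 * x 0 0 + P i 1 * x 1 0 = 0.
  by have := congr1 (fun y : 'cV[R]_2 => y i 0) hx; rewrite mul2E mxE.
have rw i := row_fact u (hvi i) (hxi i).
have t0 : x 0 0 * v 1 0 - x 1 0 * v 0 0 = 0.
  have [//|tn0] := eqVneq (x 0 0 * v 1 0 - x 1 0 * v 0 0) 0.
  exfalso; move/negP: P0; apply; apply/eqP/matrixP => i j.
  have [h1 h2 h3] := rw i.
  move: h1 => /eqP; rewrite mulf_eq0 (negPf tn0) orbF => /eqP s0.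
  rewrite mxE; case: (ord2P j) => ->; [by rewrite h2 s0 mul0r|by rewrite h3 s0 oppr0 mul0r].
apply: cV2_eq; rewrite mxE; apply/eqP; rewrite -subr_eq0; apply/eqP.
- have -> : x 0 0 - (v 0 0 * x 0 0 + v 1 0 * x 1 0) * v 0 0 =
    v 1 0 * (x 0 0 * v 1 0 - x 1 0 * v 0 0) + x 0 0 * (1 - (v 0 0 ^+ 2 + v 1 0 ^+ 2)) by ring.
  by rewrite t0 u subrr !mulr0 addr0.
- have -> : x 1 0 - (v 0 0 * x 0 0 + v 1 0 * x 1 0) * v 1 0 =
    - v 0 0 * (x 0 0 * v 1 0 - x 1 0 * v 0 0) + x 1 0 * (1 - (v 0 0 ^+ 2 + v 1 0 ^+ 2)) by ring.
  by rewrite t0 u subrr !mulr0 addr0.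
Qed.

Definition Md (r : 'rV[R]_(2 * 2 + 2)) : 'M[R]_2 := vec_mx (lsubmx r).
Definition vd (r : 'rV[R]_(2 * 2 + 2)) : 'cV[R]_2 := (rsubmx r)^T.
Definition enc (M : 'M[R]_2) (v : 'cV[R]_2) : 'rV[R]_(2 * 2 + 2) := row_mx (mxvec M) v^T.

Lemma Md_enc M v : Md (enc M v) = M.
Proof. by rewrite /Md /enc row_mxKl mxvecK. Qed.

Lemma vd_enc M v : vd (enc M v) = v.
Proof. by rewrite /vd /enc row_mxKr trmxK. Qed.

Lemma enc_dec r : enc (Md r) (vd r) = r.
Proof. by rewrite /enc /Md /vd vec_mxK trmxK hsubmxK. Qed.

Lemma ec_Md : ec Md.
Proof.
move=> i j.
have -> : (fun r => Md r i j) = (fun r : 'rV[R]_(2 * 2 + 2) => r 0 (lshift 2 (mxvec_index i j))).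
  by apply: funext => r; rewrite !mxE.
exact: coord_continuous.
Qed.

Lemma ec_vd : ec vd.
Proof.
move=> i j.
have -> : (fun r => vd r i j) = (fun r : 'rV[R]_(2 * 2 + 2) => r j (rshift (2 * 2) i)).
  by apply: funext => r; rewrite !mxE.
exact: coord_continuous.
Qed.

Lemma enc_bound (M : 'M[R]_2) (v : 'cV[R]_2) : `|M| <= 1 -> (forall i, `|v i 0| <= 1) -> `|enc M v| <= 1.
Proof.
move=> hM hv; apply: norm_le_entries => // i k; rewrite (ord1 i).
case: (splitP k) => k' hk.
- have -> : k = lshift 2 k' by apply: val_inj.
  rewrite row_mxEl; case/mxvec_indexP: k' {hk} => a b.
  by rewrite mxvecE; apply: le_trans (entry_le_norm _ _ _) hM.
- have -> : k = rshift (2 * 2) k' by apply: val_inj.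
  by rewrite row_mxEr mxE.
Qed.


Lemma sum_sq_le1 (v : 'cV[R]_2) i : \sum_k v k 0 ^+ 2 = 1 -> `|v i 0| <= 1.
Proof.
by move=> h; rewrite -((eucl1 v).2 h) entry_le_eucl.
Qed.

Lemma cont_sq_sum : continuous (fun r : 'rV[R]_(2 * 2 + 2) => \sum_i vd r i 0 ^+ 2).
Proof.
apply: cont_sum => i.
have -> : (fun r : 'rV[R]_(2 * 2 + 2) => vd r i 0 ^+ 2) = (fun r => vd r i 0 * vd r i 0).
  by apply: funext => r; rewrite expr2.
move=> x; exact (@continuousM R _ (fun r => vd r i 0) (fun r => vd r i 0) x (@ec_vd i 0 x) (@ec_vd i 0 x)).
Qed.

Lemma rank_le2 (M : 'M[R]_2) : (\rank M <= 1)%N -> M != 0 -> \rank M = 1%N.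
Proof.
move=> h1 h2; have : \rank M != 0%N by rewrite mxrank_eq0.
by move: h1; case: (\rank M) => [|[|]].
Qed.

Section Compact.
Variable A : set 'M[R]_2.

Definition S1 := Md @^-1` scrS A.
Definition S2 := [set r | `|Md r| = 1].
Definition S3 := [set r | \sum_i vd r i 0 ^+ 2 = 1].
Definition S4u := [set r | `|Md r - vd r *m ((vd r)^T *m Md r)| = 0].
Definition S4s := [set r | `|Md r *m vd r| = 0].

Lemma closed_S1 : closed S1.
Proof.
apply: preimage_closed; last exact: closed_closure.
by move=> x _; apply: mx_cont; exact: ec_Md.
Qed.

Lemma closed_S2 : closed S2.
Proof.
apply: (@preimage_closed _ _ (fun r => `|Md r|) [set x | x = 1]); last exact: closed_eq.
by move=> x _; apply: cont_norm_comp; exact: ec_Md.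
Qed.

Lemma closed_S3 : closed S3.
Proof.
apply: (@preimage_closed _ _ (fun r => \sum_i vd r i 0 ^+ 2) [set x | x = 1]); last exact: closed_eq.
by move=> x _; exact: cont_sq_sum.
Qed.

Lemma closed_S4u : closed S4u.
Proof.
apply: (@preimage_closed _ _ (fun r => `|Md r - vd r *m ((vd r)^T *m Md r)|) [set x | x = 0]); last exact: closed_eq.
move=> x _; apply: cont_norm_comp; apply: ec_sub; first exact: ec_Md.
apply: ec_mul; first exact: ec_vd.
by apply: ec_mul; [apply: ec_tr; exact: ec_vd|exact: ec_Md].
Qed.

Lemma closed_S4s : closed S4s.
Proof.
apply: (@preimage_closed _ _ (fun r => `|Md r *m vd r|) [set x | x = 0]); last exact: closed_eq.
by move=> x _; apply: cont_norm_comp; apply: ec_mul; [exact: ec_Md|exact: ec_vd].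
Qed.

Lemma compact_K (S4 : set 'rV[R]_(2 * 2 + 2)) : closed S4 -> compact (S1 `&` S2 `&` S3 `&` S4).
Proof.
move=> c4; apply: bounded_closed_compact.
- rewrite /bounded_near /=; near=> M0 => r [[[_ h2] h3] _] /=.
  rewrite -[r]enc_dec; apply: le_trans (enc_bound _ _) _.
  + by rewrite h2.
  + by move=> i; apply: sum_sq_le1.
  + by near: M0; apply: nbhs_pinfty_ge; rewrite num_real.
- by repeat apply: closedI; [exact: closed_S1|exact: closed_S2|exact: closed_S3|exact: c4].
Unshelve. all: by end_near.
Qed.


Lemma normalize (P : 'M[R]_2) : P != 0 -> `| `|P|^-1 *: P | = 1.
Proof.
move=> P0; have n0 : `|P| != 0 by rewrite normr_eq0.
by rewrite normrZ ger0_norm ?invr_ge0 // mulVf.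
Qed.

Lemma Su_eq : [set v : 'cV[R]_2 | eucl v = 1 /\ Xu A (span1 v)] =
  vd @` (S1 `&` S2 `&` S3 `&` S4u).
Proof.
apply/seteqP; split.
- move=> v [ev [P [hS hr] eP]].
  have P0 := rank1_neq0 hr.
  set M := `|P|^-1 *: P.
  exists (enc M v); last exact: vd_enc.
  rewrite /S1 /S2 /S3 /S4u /= !Md_enc !vd_enc.
  split; [split; [split|]|].
  + exact: scrS_scale.
  + exact: normalize.
  + exact/eucl1.
  + suff -> : M - v *m (v^T *m M) = 0 by rewrite normr0.
    apply: mx_eq0_ext => x; rewrite mulmxBl.
    have [c _ ec] : span1 v (P *m x) by rewrite -eP; exists x.
    have hx : M *m x = (`|P|^-1 * c) *: v by rewrite -scalemxAl -ec scalerA.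
    rewrite -!mulmxA hx -!scalemxAr vTv ?mulmx1 ?subrr //.
    exact/eucl1.
- move=> _ [r [[[h1 h2] h3] h4] <-].
  split; first exact/eucl1.
  have P0 : Md r != 0.
    by apply/negP => /eqP P0; move: h2; rewrite /S2 /= P0 normr0 => /eqP; rewrite eq_sym oner_eq0.
  have eP : Md r = vd r *m ((vd r)^T *m Md r).
    by apply/eqP; rewrite -subr_eq0 -normr_eq0; apply/eqP; exact: h4.
  have w0 : (vd r)^T *m Md r != 0.
    by apply/negP => /eqP w0; move/negP: P0; apply; rewrite eP w0 mulmx0.
  exists (Md r).
  + split; first exact: h1.
    apply: rank_le2 => //; rewrite eP.
    exact: leq_trans (mxrankM_maxl _ _) (rank_leq_col _).
  + by rewrite {1}eP img_rank1.
Qed.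

Lemma Ss_eq : [set v : 'cV[R]_2 | eucl v = 1 /\ Xs A (span1 v)] =
  vd @` (S1 `&` S2 `&` S3 `&` S4s).
Proof.
apply/seteqP; split.
- move=> v [ev [P [hS hr] eP]].
  have P0 := rank1_neq0 hr.
  set M := `|P|^-1 *: P.
  exists (enc M v); last exact: vd_enc.
  rewrite /S1 /S2 /S3 /S4s /= !Md_enc !vd_enc.
  split; [split; [split|]|].
  + exact: scrS_scale.
  + exact: normalize.
  + exact/eucl1.
  + have hv : kerm P v by rewrite eP; exists 1 => //; rewrite scale1r.
    by rewrite -scalemxAl hv scaler0 normr0.
- move=> _ [r [[[h1 h2] h3] h4] <-].
  split; first exact/eucl1.
  have P0 : Md r != 0.
    by apply/negP => /eqP P0; move: h2; rewrite /S2 /= P0 normr0 => /eqP; rewrite eq_sym oner_eq0.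
  have hv : Md r *m vd r = 0 by apply/eqP; rewrite -normr_eq0; apply/eqP; exact: h4.
  have u : vd r 0 0 ^+ 2 + vd r 1 0 ^+ 2 = 1 by move: h3; rewrite /S3 /= sum2.
  have v0 : vd r != 0.
    apply/negP => /eqP v0; move: u; rewrite v0 !mxE expr0n /= addr0 => /eqP.
    by rewrite eq_sym oner_eq0.
  exists (Md r).
  + split; first exact: h1.
    apply: rank_le2 => //.
    have nu : Md r \notin unitmx.
      apply/negP => hu; move/negP: v0; apply; apply/eqP.
      by rewrite -(mulKmx hu (vd r)) hv mulmx0.
    move: (rank_leq_col (Md r)); rewrite leq_eqVlt => /orP[/eqP r2|] //.
    by move: nu; rewrite -row_free_unit /row_free r2 eqxx.
  + apply/seteqP; split.
    * move=> x hx; exists (vd r 0 0 * x 0 0 + vd r 1 0 * x 1 0) => //.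
      by apply/esym; apply: (ker2 P0 u hv hx).
    * move=> _ [c _ <-]; rewrite /kerm /=. by rewrite -scalemxAr hv scaler0.
Qed.

End Compact.
End Helpers.

Unset Implicit Arguments.
Set Strict Implicit.

Theorem lemma3p3 (R : realType) (A : set 'M[R]_2)
  (hGL : forall M, A M -> M \in unitmx)
  (hR : scrR A !=set0)
  (hAM : almost_multiplicative (semigroup_gen A)) :
  [/\ Xu A !=set0 /\ Xs A !=set0, RP1_compact (Xu A), RP1_compact (Xs A),
      Xu A `&` Xs A = set0 &
      forall M, scrS A M -> M != 0 ->
        forall V, Xu A V -> is_line (mapset M V) /\ Xu A (mapset M V)].
Proof.
have [k k0 Hk] := am_norm hAM.
split.
- by case: hR => M hM; split; [exists (img M); exists M|exists (kerm M); exists M].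
- rewrite /RP1_compact Su_eq; apply: continuous_compact.
    by apply: continuous_subspaceT; apply: mx_cont; exact: ec_vd.
  by apply: compact_K; exact: closed_S4u.
- rewrite /RP1_compact Ss_eq; apply: continuous_compact.
    by apply: continuous_subspaceT; apply: mx_cont; exact: ec_vd.
  by apply: compact_K; exact: closed_S4s.
- apply/seteqP; split => // V [[M [hM rM] eM] [N [hN rN] eN]].
  have NM : N *m M = 0.
    apply: mx_eq0_ext => x; rewrite -mulmxA.
    have : kerm N (M *m x) by rewrite eN -eM; exists x.
    by [].
  have := Hk N M hN hM; rewrite NM normr0.
  have g1 : 0 < `|N| by rewrite normr_gt0; exact: rank1_neq0.
  have g2 : 0 < `|M| by rewrite normr_gt0; exact: rank1_neq0.
  have : 0 < k * `|N| * `|M| by rewrite !mulr_gt0.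
  by move=> h1 h2; have := lt_le_trans h1 h2; rewrite ltxx.
- move=> M hM M0 V [P [hP rP] <-].
  have eV : mapset M (img P) = img (M *m P).
    apply/seteqP; split.
    + by move=> _ [_ [x _ <-] <-]; exists x => //; rewrite mulmxA.
    + by move=> _ [x _ <-]; exists (P *m x); [exists x|rewrite mulmxA].
  have MP0 : M *m P != 0.
    apply/negP => /eqP e; have := Hk M P hM hP; rewrite e normr0.
    have g1 : 0 < `|M| by rewrite normr_gt0.
    have g2 : 0 < `|P| by rewrite normr_gt0; exact: rank1_neq0.
    have : 0 < k * `|M| * `|P| by rewrite !mulr_gt0.
    by move=> h1 h2; have := lt_le_trans h1 h2; rewrite ltxx.
  have rMP : \rank (M *m P) = 1%N.
    apply: rank_le2 => //; apply: leq_trans (mxrankM_maxr _ _) _; by rewrite rP.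
  rewrite eV; split; first exact: is_line_img.
  exists (M *m P) => //; split => //; exact: scrS_mul.
Qed.
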